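(* A monad $(T,\eta,\mu)$ on $\mathsf{Set}$ is strictly positive if and only if for every $T$-algebra $(A,e)$ and every $a\in A$, the only element $\tau\in TTA$ with $\mu_A(\tau)=\eta_A(a)$ is $\tau=\eta_{TA}(\eta_A(a))$ (i.e. the only partial evaluation witness out of the trivial formal expression $\eta_A(a)$ is $\eta_{TA}\eta_A(a)$).
   Context: A monad $(T,\eta,\mu)$ on $\mathsf{Set}$ is strictly positive if for every set $X$ the square with top map $\eta_{TX}\circ\eta_X:X\to TTX$, left map $\mathrm{id}_X$, right map $\mu_X:TTX\to TX$ and bottom map $\eta_X:X\to TX$ is a pullback; equivalently, for all $x\in X$ and $\tau\in TTX$, $\mu_X(\tau)=\eta_X(x)$ implies $\tau=\eta_{TX}\eta_X(x)$. A partial evaluation witness from $t_0\in TA$ is an element $\tau\in TTA$ with $\mu_A(\tau)=t_0$ (it witnesses that $t_0$ partially evaluates to $(Te)(\tau)$). *)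

(* Defs.v *)
(* Monads on Set, modelled with Rocq's Type as the category of sets:
   morphisms are functions, and equality of morphisms is pointwise equality. *)

Record SetMonad : Type := {
  T : Type -> Type;
  Tmap : forall (X Y : Type), (X -> Y) -> T X -> T Y;
  eta : forall X : Type, X -> T X;
  mu : forall X : Type, T (T X) -> T X;
  Tmap_id : forall X (t : T X), Tmap X X (fun x => x) t = t;
  Tmap_comp : forall X Y Z (f : X -> Y) (g : Y -> Z) (t : T X),
      Tmap X Z (fun x => g (f x)) t = Tmap Y Z g (Tmap X Y f t);
  eta_nat : forall X Y (f : X -> Y) (x : X), Tmap X Y f (eta X x) = eta Y (f x);
  mu_nat : forall X Y (f : X -> Y) (tt : T (T X)),
      Tmap X Y f (mu X tt) = mu Y (Tmap (T X) (T Y) (Tmap X Y f) tt);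
  mu_eta_l : forall X (t : T X), mu X (eta (T X) t) = t;
  mu_eta_r : forall X (t : T X), mu X (Tmap X (T X) (eta X) t) = t;
  mu_assoc : forall X (ttt : T (T (T X))),
      mu X (mu (T X) ttt) = mu X (Tmap (T (T X)) (T X) (mu X) ttt)
}.


Arguments Tmap s {X Y} _ _.
Arguments eta s {X} _.
Arguments mu s {X} _.

Definition is_pullback {P B C D : Type}
  (f : P -> B) (g : P -> C) (h : B -> D) (k : C -> D) : Prop :=
  (forall p, h (f p) = k (g p)) /\
  (forall b c, h b = k c -> exists p, f p = b /\ g p = c /\
                               forall p', f p' = b -> g p' = c -> p' = p).

Definition strictly_positive (M : SetMonad) : Prop :=
  forall X : Type,
    is_pullback (P := X) (B := T M (T M X)) (C := X) (D := T M X)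
      (fun x => eta M (eta M x)) (fun x => x) (fun tt => mu M tt) (fun x => eta M x).

Definition is_algebra (M : SetMonad) (A : Type) (e : T M A -> A) : Prop :=
  (forall a : A, e (eta M a) = a) /\
  (forall tt : T M (T M A), e (mu M tt) = e (Tmap M e tt)).

(* Main.v *)
Require Import Defs.
From Stdlib Require Import FunctionalExtensionality.

Theorem proposition3p13 (M : SetMonad) :
  strictly_positive M <->
  (forall (A : Type) (e : T M A -> A), is_algebra M A e ->
     forall (a : A) (tau : T M (T M A)),
       mu M tau = eta M a -> tau = eta M (eta M a)).
Proof.
  split.
  - intros SP A e _ a tau H.
    destruct (SP A) as [_ P].
    destruct (P tau a H) as [p [H1 [H2 _]]].
    subst p. symmetry; exact H1.
  - intros H X. split.
    + intros x. apply mu_eta_l.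
    + intros b c Hbc.
      assert (Hb : b = eta M (eta M c)).
      { assert (Halg : is_algebra M (T M X) (@mu M X)).
        { split. intros a; apply mu_eta_l. intros tt; apply mu_assoc. }
        set (tau' := Tmap M (Tmap M (@eta M X)) b).
        assert (Hm : mu M tau' = eta M (eta M c)).
        { unfold tau'. rewrite <- mu_nat. rewrite Hbc. apply eta_nat. }
        pose proof (H _ _ Halg (eta M c) tau' Hm) as Ht.
        assert (E : Tmap M (@mu M X) tau' = b).
        { unfold tau'. rewrite <- Tmap_comp.
          transitivity (Tmap M (fun x => x) b); [|apply Tmap_id].
          f_equal. apply functional_extensionality. intro t. apply mu_eta_r. }
        transitivity (Tmap M (@mu M X) tau'); [symmetry; exact E|].
        rewrite Ht. rewrite eta_nat. rewrite mu_eta_l. reflexivity. }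
      exists c. split; [symmetry; exact Hb|]. split; [reflexivity|].
      intros p' _ Hp. exact Hp.
Qed.
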